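(* Let $V$ be a real vector space of dimension $m$, $\Gamma$ a finitely generated free abelian dense subgroup of $V$ acting by translations, and $\mathcal C$ a countable $\Gamma$-invariant collection of affine hyperplanes with finitely many $\Gamma$-orbits and normals spanning $V$. Suppose there are $W_1,\dots,W_m\in\mathcal C$ intersecting in a single point $p$ and a subset $A\subset\{1,\dots,m\}$ such that $\Gamma^A$ has infinite index in $\Gamma_A$ (equivalently $\mathrm{rk}\,\Gamma^A<\mathrm{rk}\,\Gamma_A$). Then $\mathcal P$ consists of infinitely many $\Gamma$-orbits.
   Context: $\mathcal P$ is the set of points of $V$ that are $0$-dimensional intersections of $m$ elements of $\mathcal C$. For $A\subset\{1,\dots,m\}$, $W_A=\bigcap_{i\in A}W_i$ (with $W_\emptyset=V$), $A^c=\{1,\dots,m\}\setminus A$, $\Gamma^A\subset\Gamma$ is the stabilizer of $W_A$, and $\Gamma_A=\{x\in V:\exists\gamma\in\Gamma,\ \{x+p\}=W_A\cap(W_{A^c}+\gamma)\}$, which is a group containing $\Gamma^A$. *)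

(* Defs.v *)
From HB Require Import structures.
From mathcomp Require Import all_boot all_order all_algebra.
From mathcomp Require Import all_classical all_reals all_analysis.
Import numFieldTopology.Exports.
Set Implicit Arguments. Unset Strict Implicit. Unset Printing Implicit Defensive.
Import Order.TTheory GRing.Theory Num.Theory.
Local Open Scope classical_set_scope.
Local Open Scope ring_scope.

Section Defs.
Variables (R : realType) (m : nat).
Notation V := 'rV[R]_m.

Definition hyp (a : V) (c : R) : set V := [set x | (x *m a^T) 0 0 = c].

Definition is_hyperplane (H : set V) : Prop :=
  exists a c, a != 0 /\ H = hyp a c.

Definition translate (H : set V) (g : V) : set V := [set x + g | x in H].

Definition fg_free_subgroup (G : set V) : Prop :=
  exists (n : nat) (b : 'I_n -> V),
    G = [set \sum_(i < n) b i *~ z i | z in [set: 'I_n -> int]] /\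
    (forall z : 'I_n -> int, \sum_(i < n) b i *~ z i = 0 -> forall i, z i = 0).

Definition normals (C : set (set V)) : set V :=
  [set a | a != 0 /\ exists c, C (hyp a c)].

Definition normals_span (C : set (set V)) : Prop :=
  exists s : seq V, (forall a, a \in s -> normals C a) /\ (span s = fullv)%VS.

Definition orbit_pt (G : set V) (x : V) : set V := [set x + g | g in G].
Definition orbit_set (G : set V) (H : set V) : set (set V) :=
  [set translate H g | g in G].

Definition admissible (G : set V) (C : set (set V)) : Prop :=
  fg_free_subgroup G /\ dense G /\
  (forall H, C H -> is_hyperplane H) /\
  countable C /\
  (forall H g, C H -> G g -> C (translate H g)) /\
  finite_set [set orbit_set G H | H in C] /\
  normals_span C.

Definition Pts (C : set (set V)) : set V :=
  [set x | exists Ws : 'I_m -> set V,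
     (forall i, C (Ws i)) /\ \bigcap_(i in [set: 'I_m]) Ws i = [set x]].

Definition W_ (W : 'I_m -> set V) (A : {set 'I_m}) : set V :=
  [set x | forall i, i \in A -> W i x].

Definition GammaUp (G : set V) (W : 'I_m -> set V) (A : {set 'I_m}) : set V :=
  [set g | G g /\ translate (W_ W A) g = W_ W A].

Definition GammaLow (G : set V) (W : 'I_m -> set V) (p : V) (A : {set 'I_m})
  : set V :=
  [set x | exists g, G g /\
     [set x + p] = W_ W A `&` translate (W_ W (~: A)) g].

(* cosets of a subgroup K inside a set L : the index of K in L is infinite
   iff this set is infinite *)
Definition cosets (K L : set V) : set (set V) := [set orbit_pt K x | x in L].

End Defs.

(* Main.v *)
Require Import Defs.
From HB Require Import structures.
From mathcomp Require Import all_boot all_order all_algebra.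
From mathcomp Require Import all_classical all_reals all_analysis.
Import Order.TTheory GRing.Theory Num.Theory.
Local Open Scope classical_set_scope.
Local Open Scope ring_scope.

Section Aux.
Variables (R : realType) (m : nat).
Notation V := 'rV[R]_m.

Lemma translateD (X : set V) a b :
  translate (translate X a) b = translate X (a + b).
Proof.
apply/seteqP; split => x /=.
- by case=> y [z Xz <-] <-; exists z => //; rewrite addrA.
- by case=> z Xz <-; exists (z + a); [exists z | rewrite addrA].
Qed.

Lemma translate0 (X : set V) : translate X 0 = X.
Proof.
apply/seteqP; split => x /=; first by case=> y Xy <-; rewrite addr0.
by move=> Xx; exists x => //; rewrite addr0.
Qed.

Lemma hyp_aff (H : set V) u v w : is_hyperplane H -> H u -> H v -> H w ->
  H (u + v - w).
Proof.
case=> a [c [_ ->]]; rewrite /hyp /= => hu hv hw.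
by rewrite !mulmxDl mulNmx [X in X = c]mxE [X in X + _ = c]mxE [X in _ + X = c]mxE hu hv hw addrK.
Qed.

End Aux.

Theorem mainTheorem7 (R : realType) (m : nat) (G : set 'rV[R]_m)
  (C : set (set 'rV[R]_m)) (W : 'I_m -> set 'rV[R]_m) (p : 'rV[R]_m)
  (A : {set 'I_m}) :
  admissible G C ->
  (forall i, C (W i)) ->
  \bigcap_(i in [set: 'I_m]) W i = [set p] ->
  infinite_set (cosets (GammaUp G W A) (GammaLow G W p A)) ->
  infinite_set [set orbit_pt G x | x in Pts C].
Proof.
move=> [_ [_ [hypC [_ [invC _]]]]] CW Wp Hinf Hfin; apply: Hinf.
have pW : forall i, W i p.
  by move=> i; have : [set p] p by []; rewrite -Wp => /(_ i I).
set WA := W_ W A.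
pose S (x : 'rV[R]_m) := translate WA x = WA.
have SD : forall a b, S a -> S b -> S (a + b).
  by move=> a b; rewrite /S -translateD => -> ->.
have SN : forall a, S a -> S (- a).
  by move=> a Sa; rewrite /S -{1}Sa translateD subrr translate0.
have affA : forall u v w, WA u -> WA v -> WA w -> WA (u + v - w).
  move=> u v w hu hv hw i iA; apply: hyp_aff; [exact: hypC|exact: hu|exact: hv|exact: hw].
have pA : WA p by move=> i _.
have Sx0 : forall x0, WA (x0 + p) -> S x0.
  move=> x0 hx; apply/seteqP; split => y /=.
  - case=> z hz <-; have := affA _ _ _ hz hx pA; by rewrite addrA addrK.
  - move=> hy; exists (y + p - (x0 + p)); first exact: affA.
    by rewrite opprD addrACA subrr addr0 subrK.
pose h (O : set 'rV[R]_m) := [set x | O (x + p) /\ S x].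
apply: (sub_finite_set _ (finite_image h Hfin)).
move=> _ [x0 [g [Gg Hg]] <-].
have x0A : WA (x0 + p) by have : [set x0 + p] (x0 + p) by []; rewrite Hg => -[].
have S0 := Sx0 _ x0A.
exists (orbit_pt G (x0 + p)).
  exists (x0 + p) => //.
  exists (fun i => if i \in A then W i else translate (W i) g); split.
    by move=> i; case: ifP => _; [exact: CW | apply: invC].
  rewrite Hg; apply/seteqP; split => x /=.
  - move=> hx; split.
      by move=> i iA; have := hx i I; rewrite iA.
    exists (x - g); last by rewrite subrK.
    move=> i; rewrite finset.in_setC => /negbTE iA; have := hx i I; rewrite iA.
    by case=> z hz <-; rewrite addrK.
  - case=> hA [y hy yx] i _; case: ifP => iA; first exact: (hA i iA).
    by rewrite -yx; exists y => //; apply: hy; rewrite finset.in_setC iA.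
apply/seteqP; split => x /=.
- case=> [[g' Gg' e] Sx]; exists g'; last first.
    by apply: (addIr p); rewrite -e addrAC.
  split => //.
  have xE : x = x0 + g' by apply: (addIr p); rewrite -e addrAC.
  have -> : g' = x + - x0 by rewrite xE addrC addKr.
  by apply: SD => //; apply: SN.
- case=> g' [Gg' Sg'] <-; split; last exact: SD.
  by exists g' => //; rewrite addrAC.
Qed.
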